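(* Let $[n]=E_1\sqcup\cdots\sqcup E_r$ be a partition such that $\max E_i<\min E_{i+1}$ for $i=1,\dots,r-1$, and let $f:\{1,\dots,r\}\to\{2,3,\dots\}$ be a nondecreasing map. Let $\Delta$ be the simplicial complex on $[n]$ whose facets are exactly the sets $F\subseteq[n]$ such that (1) $|E_i-F|\le1$ for $i=1,\dots,r$, and (2) if $\min([n]-F)\in E_i$ then $|F|=n-f(i)$. Then $\Delta$ is shellable.
   Context: A simplicial complex is shellable if its facets can be ordered $F_1,\dots,F_q$ so that for each $k\ge2$, $(\bigcup_{i<k}2^{F_i})\cap 2^{F_k}$ is pure of dimension $\dim F_k-1$, where $2^F$ is the set of all subsets of $F$ (facets may have different dimensions). *)

(* Defs.v *)
From mathcomp Require Import all_boot.
Set Implicit Arguments. Unset Strict Implicit. Unset Printing Implicit Defensive.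

(* A simplicial complex on a finite vertex set T is represented by its
   (downward closed) predicate of faces. *)

Definition gen_complex (T : finType) (A : pred {set T}) : pred {set T} :=
  fun G => [exists F, A F && (G \subset F)].

Definition is_facet (T : finType) (K : pred {set T}) (F : {set T}) : Prop :=
  K F /\ (forall H, K H -> F \subset H -> H = F).

(* A complex K is pure of dimension d if every maximal face H has
   dimension #|H| - 1 = d.  We pass m = d + 2 (to avoid negative
   dimensions), so the condition reads #|H| + 1 = m. *)
Definition pure_dim_plus2 (T : finType) (K : pred {set T}) (m : nat) : Prop :=
  forall H, is_facet K H -> #|H|.+1 = m.

(* Shellability, allowing facets of different dimensions:
   an enumeration F_1,...,F_q of all facets (without repetition) such that
   for every k >= 2, (U_{i<k} 2^{F_i}) ∩ 2^{F_k} is pure of dimension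
   dim F_k - 1, i.e. all its maximal faces H satisfy #|H| + 1 = #|F_k|
   (dim F_k - 1 = #|F_k| - 2).
   Indices below are 0-based. *)
Definition shellable (T : finType) (K : pred {set T}) : Prop :=
  exists s : seq {set T},
    [/\ uniq s,
        (forall F, F \in s <-> is_facet K F) &
        forall k, 0 < k < size s ->
          let Fk := nth set0 s k in
          pure_dim_plus2
            (fun G => (G \subset Fk) &&
                      [exists i : 'I_k, G \subset nth set0 s i])
            #|Fk| ].

Definition prop32_facet (n r : nat) (E : 'I_r -> {set 'I_n}) (f : 'I_r -> nat)
    (F : {set 'I_n}) : bool :=
  [forall i, #|E i :\: F| <= 1] &&
  [exists i, [exists x,
     [&& x \in E i, x \notin F,
         [forall y, (y \notin F) ==> (x <= y)] & #|F| + f i == n]]].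

(* Main.v *)
Require Import Defs.
From mathcomp Require Import all_boot.
From mathcomp Require Import zify.
Set Implicit Arguments. Unset Strict Implicit. Unset Printing Implicit Defensive.

Definition wt n (A : {set 'I_n}) := \sum_(i in A) 2^(n - i).

Lemma geo_bound y N : y < N -> \sum_(y.+1 <= i < N) 2^(N-i) + 2 <= 2^(N-y).
Proof.
elim: N => [//|N IH] hy.
case: (ltnP y N) => hyN; last first.
  have -> : N = y by lia.
  by rewrite big_geq // subSnn.
rewrite big_nat_recr //= subSnn.
have -> : \sum_(y.+1 <= i < N) 2 ^ (N.+1 - i) = 2 * \sum_(y.+1 <= i < N) 2 ^ (N - i).
  rewrite big_distrr /=; apply: eq_big_nat => i /andP[_ hi].
  by rewrite subSn ?(ltnW hi) // expnS.
rewrite subSn ?(ltnW hyN) // expnS.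
have := IH hyN. rewrite expnS expn0 muln1. move: (2^(N-y)) (\sum_(y.+1 <= i < N) 2 ^ (N - i)) => a b. lia.
Qed.

Lemma wt_lt n (A B : {set 'I_n}) (y : 'I_n) :
  (forall z : 'I_n, z < y -> (z \in A) = (z \in B)) -> y \in B -> y \notin A -> wt A < wt B.
Proof.
move=> ag yB yA.
rewrite /wt (bigID (fun i : 'I_n => i < y)) [X in _ < X](bigID (fun i : 'I_n => i < y)) /=.
have -> : \sum_(i in A | i < y) 2^(n-i) = \sum_(i in B | i < y) 2^(n-i).
  apply: eq_bigl => z /=; case: (ltnP z y) => h; first by rewrite !andbT ag.
  by rewrite !andbF.
rewrite ltn_add2l.
apply: (@leq_trans (2^(n-y))); last first.
  by rewrite (bigD1 y) /= ?yB ?ltnn // leq_addr.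
apply: (@leq_trans (\sum_(i < n | y < i) 2^(n-i)).+1).
  rewrite ltnS big_mkcond [X in _ <= X]big_mkcond /=; apply: leq_sum => i _.
  case: (boolP (i \in A)) => iA //=; case: ltnP => //= h.
  have : i != y by apply: contraNneq yA => <-.
  rewrite -val_eqE /= => ne; have -> : y < i by lia. done.
have := geo_bound (ltn_ord y).
rewrite big_geq_mkord.
have -> : \sum_(i < n | true && (y < i)) 2 ^ (n - i) = \sum_(i < n | y < i) 2 ^ (n - i) by [].
lia.
Qed.

Lemma blk_lt n r (E : 'I_r -> {set 'I_n})
  (E_nonempty : forall i, E i != set0)
  (E_ordered : forall (i j : 'I_r), nat_of_ord j = i.+1 ->
                 forall x y, x \in E i -> y \in E j -> x < y) :
  forall i j : 'I_r, i < j -> forall x y, x \in E i -> y \in E j -> x < y.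
Proof.
suff H : forall d (i j : 'I_r), nat_of_ord j = i + d.+1 -> forall x y, x \in E i -> y \in E j -> x < y.
  move=> i j ij; apply: (H (j - i.+1)); lia.
elim=> [|d IH] i j hj x y xi yj.
  by apply: (E_ordered i j) => //; lia.
have hm : i + d.+1 < r by have := ltn_ord j; lia.
have [z zm] := set0Pn _ (E_nonempty (Ordinal hm)).
apply: (@ltn_trans z); first by apply: (IH i (Ordinal hm)).
by apply: (E_ordered (Ordinal hm) j) => //=; lia.
Qed.

Lemma card_le1_eq (T : finType) (A : {set T}) a b : #|A| <= 1 -> a \in A -> b \in A -> a = b.
Proof.
move=> h aA bA; apply/eqP; apply: contraLR h => ne.
have : #|[set a; b]| <= #|A| by apply: subset_leq_card; apply/subsetP => z; rewrite !inE => /orP[]/eqP->.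
by rewrite cards2 ne; lia.
Qed.

Lemma ex_subset_card (T : finType) (A : {set T}) k : k <= #|A| -> exists2 S : {set T}, S \subset A & #|S| = k.
Proof.
elim: k => [|k IH] h; first by exists set0; rewrite ?sub0set ?cards0.
have [S SA cS] := IH (ltnW h).
case: (set_0Vmem (A :\: S)) => [h0 | [a]].
  move/eqP: h0; rewrite setD_eq0 => /subset_leq_card; lia.
rewrite inE => /andP[aS aA].
exists (a |: S); first by rewrite subUset sub1set aA SA.
by rewrite cardsU1 aS cS.
Qed.

Lemma blk_le n r (E : 'I_r -> {set 'I_n})
  (E_nonempty : forall i, E i != set0)
  (E_ordered : forall (i j : 'I_r), nat_of_ord j = i.+1 ->
                 forall x y, x \in E i -> y \in E j -> x < y) i j x y :
  x \in E i -> y \in E j -> x < y -> i <= j.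
Proof.
move=> xi yj xy; rewrite leqNgt; apply/negP => ji.
have := blk_lt E_nonempty E_ordered ji yj xi; lia.
Qed.

Lemma blk_eq n r (E : 'I_r -> {set 'I_n})
  (E_disjoint : forall i j, i != j -> [disjoint E i & E j]) i j x :
  x \in E i -> x \in E j -> i = j.
Proof.
move=> xi xj; apply/eqP; apply: contraLR xj => ne.
by rewrite (disjointFr (E_disjoint _ _ ne) xi).
Qed.

Lemma antichain n r (E : 'I_r -> {set 'I_n}) (f : 'I_r -> nat)
  (E_nonempty : forall i, E i != set0)
  (E_disjoint : forall i j, i != j -> [disjoint E i & E j])
  (E_ordered : forall (i j : 'I_r), nat_of_ord j = i.+1 ->
                 forall x y, x \in E i -> y \in E j -> x < y)
  (f_mono : forall i j : 'I_r, i <= j -> f i <= f j) F G :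
  prop32_facet E f F -> prop32_facet E f G -> F \subset G -> F = G.
Proof.
case/andP=> _ /existsP[i1 /existsP[x1 /and4P[x1E x1F /forallP x1m cF]]].
case/andP=> _ /existsP[i2 /existsP[x2 /and4P[x2E x2G /forallP x2m cG]]] FG.
have x2F : x2 \notin F by apply: contra x2G; apply: (subsetP FG).
have le12 := implyP (x1m x2) x2F.
have i12 : i1 <= i2.
  have [h|h] : x1 < x2 \/ x1 = x2 by case: (ltngtP x1 x2) le12 => h; [left|lia|right; apply: val_inj].
    exact (blk_le E_nonempty E_ordered x1E x2E h).
  by subst x2; rewrite (blk_eq E_disjoint x1E x2E).
have hf := f_mono _ _ i12.
apply/eqP; rewrite eqEcard FG /=; move/eqP: cF; move/eqP: cG. move: (f i1) (f i2) #|G| #|F| hf => a b c d. lia.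
Qed.

Lemma swap_cond n r (E : 'I_r -> {set 'I_n}) (G : {set 'I_n}) x d :
  (forall e, #|E e :\: G| <= 1) ->
  (forall e z, x \in E e -> z \in E e -> z \notin G -> z = d) ->
  forall e, #|E e :\: (d |: (G :\ x))| <= 1.
Proof.
move=> h1 h2 e; case: (boolP (x \in E e)) => xe.
- apply: (@leq_trans #|[set x]|); last by rewrite cards1.
  apply: subset_leq_card; apply/subsetP => z; rewrite !inE => /andP[].
  rewrite negb_or negb_and negbK => /andP[zd /orP[//|zG]] ze.
  by rewrite (h2 _ _ xe ze zG) eqxx in zd.
- apply: leq_trans (h1 e); apply: subset_leq_card; apply/subsetP => z; rewrite !inE => /andP[].
  rewrite negb_or negb_and negbK => /andP[zd /orP[/eqP zx|zG]] ze.
    by rewrite -zx ze in xe.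
  by rewrite zG ze.
Qed.

Lemma swap_card n (G : {set 'I_n}) x d : d \notin G -> x \in G -> #|d |: (G :\ x)| = #|G|.
Proof.
move=> dG xG; rewrite cardsU1 [#|G|](cardsD1 x) xG !inE (negbTE dG) andbF /=.
by rewrite addnC.
Qed.

Lemma exchange n r (E : 'I_r -> {set 'I_n}) (f : 'I_r -> nat)
  (E_nonempty : forall i, E i != set0)
  (E_disjoint : forall i j, i != j -> [disjoint E i & E j])
  (E_cover : forall x : 'I_n, exists i, x \in E i)
  (E_ordered : forall (i j : 'I_r), nat_of_ord j = i.+1 ->
                 forall x y, x \in E i -> y \in E j -> x < y)
  (f_ge2 : forall i, 2 <= f i)
  (f_mono : forall i j : 'I_r, i <= j -> f i <= f j) F G :
  prop32_facet E f F -> prop32_facet E f G -> F != G -> wt F <= wt G ->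
  exists F' x, [/\ prop32_facet E f F', wt F' < wt G, x \in G, x \notin F & G :\ x \subset F'].
Proof.
move=> PF PG FG wFG.
set S := (F :\: G) :|: (G :\: F).
have [z0 z0S] : exists z0, z0 \in S.
  case: (set_0Vmem S) => [S0|[z zS]]; last by exists z.
  case/negP: FG; apply/eqP/setP => z.
  move: S0 => /setP/(_ z); rewrite /S !inE.
  by case: (z \in F); case: (z \in G).
case: (arg_minnP (fun z : 'I_n => nat_of_ord z) z0S) => x xS xmin.
have ag : forall z : 'I_n, z < x -> (z \in F) = (z \in G).
  move=> z zx; have : z \notin S by apply: contraL zx => zS; rewrite -leqNgt xmin.
  by rewrite /S !inE; case: (z \in F); case: (z \in G).
have [xG xF] : x \in G /\ x \notin F.
  have xS2 : x \in S := xS. move: xS2; rewrite /S !inE => /orP[/andP[xG xF]|/andP[xF xG]]; last by [].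
  have := wt_lt (fun z zx => esym (ag z zx)) xF xG.
  move: (wt F) (wt G) wFG => a b'; lia.
move: (PG) => /andP[/forallP hG1 /existsP[i0 /existsP[m0 /and4P[m0E m0G /forallP m0m /eqP cG]]]].
move: (PF) => /andP[/forallP hF1 /existsP[b /existsP[c0 /and4P[c0E c0F /forallP c0m /eqP cF]]]].
have xm0 : x != m0 by apply: contraTneq xG => ->.
case: (ltnP m0 x) => hm.
-
  have [d0 d0P] : exists d : 'I_n, (d \notin G) && (x < d).
    case: (boolP [exists d, (d \notin G) && (x < d)]) => [/existsP//|/existsPn hno].
    exfalso; case/negP: FG; apply/eqP.
    apply: (antichain E_nonempty E_disjoint E_ordered f_mono PF PG).
    apply/subsetP => z zF; case: (ltngtP z x) => h.
    + by rewrite -ag.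
    + by have := hno z; rewrite h andbT negbK.
    + have zx : z = x by apply: val_inj.
      by move: xF; rewrite -zx zF.
  case: (@arg_minnP _ _ (fun z : 'I_n => (z \notin G) && (x < z)) (fun z : 'I_n => nat_of_ord z) d0P) => d dP dmin.
  move: dP => /andP[dG xd].
  have dm : forall z : 'I_n, z \notin G -> x < z -> d <= z by move=> z zG zx; apply: dmin; rewrite zG zx.
  exists (d |: (G :\ x)), x; split => //; last by apply: subsetUr.
  + apply/andP; split.
      apply/forallP; apply: swap_cond => // e z xe ze zG.
      case: (ltngtP z x) => h.
      * have zF : z \notin F by rewrite ag.
        have hx : x \in E e :\: F by rewrite !inE xe xF.
        have hz : z \in E e :\: F by rewrite !inE ze zF.
        have zx := card_le1_eq (hF1 e) hz hx; by rewrite zx ltnn in h.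
      * have dz := dm z zG h.
        have [e' de'] := E_cover d.
        case: (ltngtP d z) dz => // dz _; last by apply: val_inj.
        have ee' : e <= e' := blk_le E_nonempty E_ordered xe de' xd.
        have e'e : e' <= e := blk_le E_nonempty E_ordered de' ze dz.
        have ee : e' = e by apply: val_inj; apply/eqP; rewrite eqn_leq ee' e'e.
        subst e'.
        have hx : z \in E e :\: G by rewrite !inE ze zG.
        have hz : d \in E e :\: G by rewrite !inE de' dG.
        exact: card_le1_eq (hG1 e) hx hz.
      * have zx : z = x by apply: val_inj.
        by move: zG; rewrite zx xG.
    apply/existsP; exists i0; apply/existsP; exists m0; apply/and4P; split => //.
    * rewrite !inE (negbTE m0G) andbF orbF; apply/eqP => md.
      have : m0 < d by apply: ltn_trans xd.
      by rewrite md ltnn.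
    * apply/forallP => y; apply/implyP; rewrite !inE negb_or negb_and negbK => /andP[_ /orP[/eqP->|yG]].
        exact: ltnW.
      exact: (implyP (m0m y) yG).
    * by rewrite swap_card // cG.
  + apply: wt_lt => //.
      move=> z zx; rewrite !inE.
      have zd : (z == d) = false.
        apply: negbTE; apply/eqP => e; move: zx xd; rewrite e => h1 h2. have := ltn_trans h1 h2; by rewrite ltnn.
      have zx' : (z != x) by apply/eqP => e; move: zx; rewrite e ltnn.
      by rewrite zd zx'.
    by [].
    rewrite !inE negb_or negb_and negbK eqxx andbT.
    by apply/eqP => e; move: xd; rewrite -e ltnn.
- have hlt : x < m0 by rewrite ltn_neqAle hm andbT; apply: contra xm0 => /eqP h; apply/eqP/val_inj.
  have c0x : c0 = x.
    apply: val_inj; apply/eqP; rewrite eqn_leq (implyP (c0m x) xF) /= leqNgt; apply/negP => h.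
    have c0G : c0 \notin G by rewrite -ag.
    have h2 := implyP (m0m c0) c0G; have := leq_ltn_trans h2 h; by rewrite ltnNge hm.
  subst c0.
  have bi0 : b <= i0 := blk_le E_nonempty E_ordered c0E m0E hlt.
  case: (ltngtP b i0) => hb.
  +
    have hS : (f b).-1 <= #|~: G|.
      have := f_mono _ _ (ltnW hb); have := cardsC G; rewrite card_ord.
      move: (f b) (f i0) #|G| #|~: G| cG (f_ge2 b) => a a' c c' H1 H2 H3 H4; clear -H1 H2 H3 H4; timeout 10 lia.
    have [S0 S0G cS0] := ex_subset_card hS.
    have xS0 : x \notin S0.
      by apply/negP => h; have := subsetP S0G x h; rewrite inE xG.
    have S0m : forall z, z \in S0 -> m0 <= z.
      by move=> z h; apply: (implyP (m0m z)); have := subsetP S0G z h; rewrite inE.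
    exists (~: (x |: S0)), x; split => //.
    * apply/andP; split.
      - apply/forallP => e; case: (boolP (x \in E e)) => xe.
        + apply: (@leq_trans #|[set x]|); last by rewrite cards1.
          apply: subset_leq_card; apply/subsetP => z; rewrite !inE negbK => /andP[/orP[//|zS] ze].
          exfalso; have eb : e = b := blk_eq E_disjoint xe c0E; subst e.
          have := S0m z zS; rewrite leq_eqVlt => /orP[/eqP mz|mz].
            have mz' : m0 = z := val_inj mz; subst z.
            have ib := blk_eq E_disjoint m0E ze; by rewrite ib ltnn in hb.
          have := blk_le E_nonempty E_ordered m0E ze mz; by rewrite leqNgt hb.
        + apply: leq_trans (hG1 e); apply: subset_leq_card; apply/subsetP => z.
          rewrite !inE negbK => /andP[/orP[/eqP zx|zS] ze].
            by move: xe; rewrite -zx ze.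
          by rewrite ze andbT; have := subsetP S0G z zS; rewrite inE.
      - apply/existsP; exists b; apply/existsP; exists x; apply/and4P; split => //.
        + by rewrite !inE negbK eqxx.
        + apply/forallP => y; apply/implyP; rewrite !inE negbK => /orP[/eqP->//|yS].
          move: (S0m y yS) => H; exact: leq_trans (ltnW hlt) H.
        + apply/eqP; have := cardsC (x |: S0); rewrite cardsU1 xS0 cS0 card_ord.
          have := f_ge2 b; move: (f b) (#|~: (x |: S0)|) => a c H1 H2; clear -H1 H2; timeout 10 lia.
    * apply: wt_lt => //.
      - move=> z zx.
        have zS : z \notin S0 by apply/negP => zS; move: (S0m z zS) => H; have := leq_trans (ltn_trans zx hlt) H; by rewrite ltnn.
        have zG : z \in G by apply/negPn/negP => zG; move: (implyP (m0m z) zG) => H; have := leq_trans (ltn_trans zx hlt) H; by rewrite ltnn.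
        have zx' : (z == x) = false by apply/negbTE/eqP => e; move: zx; rewrite e ltnn.
        rewrite !inE zx' (negbTE zS) zG. done.
      - exact: xG.
      - by rewrite !inE negbK eqxx.
    * apply/subsetP => z; rewrite !inE negb_or => /andP[zx zG]; rewrite zx /=.
      by apply/negP => zS; have := subsetP S0G z zS; rewrite inE zG.
  + by rewrite leqNgt hb in bi0.
  + have bi : b = i0 := val_inj hb. subst i0.
    exists (m0 |: (G :\ x)), x; split => //; last exact: subsetUr.
    * apply/andP; split.
      - apply/forallP; apply: swap_cond => // e z xe ze zG.
        have eb := blk_eq E_disjoint xe c0E; subst e.
        have h1 : z \in E b :\: G by rewrite !inE ze zG.
        have h2 : m0 \in E b :\: G by rewrite !inE m0E m0G.
        exact: card_le1_eq (hG1 b) h1 h2.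
      - apply/existsP; exists b; apply/existsP; exists x; apply/and4P; split => //.
        + by rewrite !inE eqxx (negbTE xm0).
        + apply/forallP => y; apply/implyP; rewrite !inE negb_or negb_and negbK => /andP[_ /orP[/eqP->//|yG]].
          move: (implyP (m0m y) yG) => H; exact: leq_trans (ltnW hlt) H.
        + by rewrite swap_card // cG.
    * apply: wt_lt => //.
      - move=> z zx.
        have zm : (z == m0) = false.
          apply/negbTE/eqP => e; move: zx hlt; rewrite e => h1 h2; have := ltn_trans h1 h2; by rewrite ltnn.
        have zx' : (z != x) by apply/eqP => e; move: zx; rewrite e ltnn.
        by rewrite !inE zm zx'.
      - exact: xG.
      - by rewrite !inE eqxx (negbTE xm0).
Qed.

Lemma facet_iff n r (E : 'I_r -> {set 'I_n}) (f : 'I_r -> nat)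
  (E_nonempty : forall i, E i != set0)
  (E_disjoint : forall i j, i != j -> [disjoint E i & E j])
  (E_ordered : forall (i j : 'I_r), nat_of_ord j = i.+1 ->
                 forall x y, x \in E i -> y \in E j -> x < y)
  (f_mono : forall i j : 'I_r, i <= j -> f i <= f j) F :
  is_facet (gen_complex (prop32_facet E f)) F <-> prop32_facet E f F.
Proof.
split.
- case=> /existsP[A /andP[PA FA]] max.
  have KA : gen_complex (prop32_facet E f) A by apply/existsP; exists A; rewrite PA subxx.
  by rewrite -(max A KA FA).
- move=> PF; split; first by apply/existsP; exists F; rewrite PF subxx.
  move=> H /existsP[A /andP[PA HA]] FH.
  have FA : F \subset A := subset_trans FH HA.
  have eFA := antichain E_nonempty E_disjoint E_ordered f_mono PF PA FA.
  by subst A; apply/eqP; rewrite eqEsubset HA FH.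
Qed.

Unset Implicit Arguments.
Set Strict Implicit.

Theorem proposition3p2 (n r : nat) (E : 'I_r -> {set 'I_n}) (f : 'I_r -> nat)
  (E_nonempty : forall i, E i != set0)
  (E_disjoint : forall i j, i != j -> [disjoint E i & E j])
  (E_cover : forall x : 'I_n, exists i, x \in E i)
  (E_ordered : forall (i j : 'I_r), nat_of_ord j = i.+1 ->
                 forall x y, x \in E i -> y \in E j -> x < y)
  (f_ge2 : forall i, 2 <= f i)
  (f_mono : forall i j : 'I_r, i <= j -> f i <= f j) :
  shellable (gen_complex (prop32_facet E f)).
Proof.
pose le := fun A B : {set 'I_n} => wt A <= wt B.
pose s := sort le (enum (prop32_facet E f)).
have sorted_s : sorted le s by apply: sort_sorted => A B; apply: leq_total.
have uniq_s : uniq s by rewrite sort_uniq enum_uniq.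
have mem_s : forall F, (F \in s) = prop32_facet E f F by move=> F; rewrite mem_sort mem_enum.
have le_tr : transitive le by move=> A B C; apply: leq_trans.
have le_rf : reflexive le by move=> A; apply: leqnn.
exists s; split => //.
  by move=> F; rewrite mem_s; split; move/facet_iff => h; apply: h.
move=> k /andP[k0 ks] /= H [/andP[HFk /existsP[i Hi]] Hmax].
have Pnth : forall j, j < size s -> prop32_facet E f (nth set0 s j).
  by move=> j js; rewrite -mem_s mem_nth.
have ik : i < k := ltn_ord i.
have is_ : i < size s := ltn_trans ik ks.
have neq : nth set0 s i != nth set0 s k.
  by rewrite nth_uniq // neq_ltn ik.
have wle : le (nth set0 s i) (nth set0 s k).
  exact: (sorted_leq_nth le_tr le_rf set0 sorted_s) (ltnW ik).
have [F' [x [PF' wlt xG xF sub]]] :=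
  exchange E_nonempty E_disjoint E_cover E_ordered f_ge2 f_mono (Pnth i is_) (Pnth k ks) neq wle.
have F's : F' \in s by rewrite mem_s.
have js : index F' s < size s by rewrite index_mem.
have nthj : nth set0 s (index F' s) = F' := nth_index set0 F's.
have jk : index F' s < k.
  rewrite ltnNge; apply/negP => kj.
  have := (sorted_leq_nth le_tr le_rf set0 sorted_s) _ _ ks js kj.
  by rewrite /le nthj leqNgt wlt.
have inK : (nth set0 s k :\ x \subset nth set0 s k) &&
           [exists i0 : 'I_k, nth set0 s k :\ x \subset nth set0 s i0].
  apply/andP; split; first exact: subsetDl.
  by apply/existsP; exists (Ordinal jk); rewrite /= nthj.
have Hsub : H \subset nth set0 s k :\ x.
  apply/subsetP => z zH; rewrite !inE (subsetP HFk z zH) andbT.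
  by apply: contraNneq xF => <-; apply: (subsetP Hi).
have eH := Hmax _ inK Hsub.
by rewrite -eH [#|nth set0 s k|](cardsD1 x) xG.
Qed.
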